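(* Let $0<p<e^{-1}$ and let $\bar Q=(\bar q_{j,k})_{j,k\geq1}$ be the generator on $\mathbb N=\{1,2,\dots\}$ with $\bar q_{j,k}=\binom{j-1}{k-1}p^k(1-p)^{j-k}$ for $1\leq k\leq j-1$, $\bar q_{j,j+1}=(j+1)p$, $\bar q_{j,j}=p^j-(2+j)p$, and $\bar q_{j,k}=0$ otherwise. Then $\bar Q$ is positive recurrent. *)

(* Defs.v *)
From HB Require Import structures.
From mathcomp Require Import all_boot all_order all_algebra.
From mathcomp Require Import all_classical all_reals all_analysis.
Set Implicit Arguments. Unset Strict Implicit. Unset Printing Implicit Defensive.
Import Order.TTheory GRing.Theory Num.Theory.
Local Open Scope classical_set_scope.
Local Open Scope ring_scope.

(* We develop the standard notions (Norris, Markov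
   Chains, ch. 2-3) for the minimal continuous-time chain via its jump chain. *)
Section CTMC.
Variable R : realType.
Implicit Types (Q : nat -> nat -> R) (S : set nat).

Definition jump_rate Q i : R := - Q i i.

Definition jump_matrix Q i j : R :=
  if jump_rate Q i == 0 then (i == j)%:R
  else if i == j then 0 else Q i j / jump_rate Q i.

Fixpoint path_prob Q (x : nat) (s : seq nat) : R :=
  if s is y :: s' then jump_matrix Q x y * path_prob Q y s' else 1.

(* first-return paths of the jump chain to i inside S:
   s = [x1; ...; xn], n >= 1, xn = i, x1 .. x(n-1) <> i *)
Definition first_return_paths S (i : nat) : set (seq nat) :=
  [set s | s != [::] /\ last i s = i /\
           all (fun x => x != i) (behead (belast i s)) /\
           (forall x, x \in s -> S x)].

(* expected total holding time along a path started at i: the chain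
   spends mean time 1/q_x in each state x = X_0 (=i), ..., X_{n-1} *)
Definition path_mean_time Q (i : nat) (s : seq nat) : R :=
  \sum_(x <- belast i s) (jump_rate Q x)^-1.

Definition return_prob Q S i : \bar R :=
  \esum_(s in first_return_paths S i) (path_prob Q i s)%:E.

Definition mean_return_time Q S i : \bar R :=
  \esum_(s in first_return_paths S i)
     (path_prob Q i s * path_mean_time Q i s)%:E.

Definition recurrent_state Q S i : Prop := return_prob Q S i = 1%E.

Definition positive_recurrent_state Q S i : Prop :=
  recurrent_state Q S i /\ (mean_return_time Q S i < +oo)%E.

Definition positive_recurrent Q S : Prop :=
  forall i, S i -> positive_recurrent_state Q S i.

End CTMC.

(* The generator \bar Q on N = {1,2,...} from the paper (0 outside N). *)
Definition Qbar (R : realType) (p : R) (j k : nat) : R :=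
  if (0 < j)%N then
    if (1 <= k <= j - 1)%N then 'C(j - 1, k - 1)%:R * p ^+ k * (1 - p) ^+ (j - k)
    else if k == j.+1 then (j.+1)%:R * p
    else if k == j then p ^+ j - (2 + j)%:R * p
    else 0
  else 0.

Definition Nat1 : set nat := [set n | (0 < n)%N].

(* Main.v *)
Require Import Defs.
From HB Require Import structures.
From mathcomp Require Import all_boot all_order all_algebra.
From mathcomp Require Import all_classical all_reals all_analysis.
From mathcomp Require Import ring lra zify.
Import Order.TTheory GRing.Theory Num.Theory.
Local Open Scope ring_scope.

Section Basic.
Context {R : realType} {p : R} (p0 : 0 < p) (p1 : p < 1).

Definition bn (n m : nat) : R := 'C(n, m)%:R * p ^+ m * (1 - p) ^+ (n - m).

Lemma bn_ge0 n m : 0 <= bn n m.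
Proof.
rewrite /bn; apply: mulr_ge0; first apply: mulr_ge0.
- exact: ler0n.
- exact: exprn_ge0 (ltW p0).
- apply: exprn_ge0; have := p1; lra.
Qed.

Lemma bn_sum n : \sum_(m < n.+1) bn n m = 1.
Proof.
have := exprDn (1 - p) p n; rewrite subrK expr1n => ->.
by apply: eq_bigr => i _; rewrite /bn -mulr_natl; ring.
Qed.

Lemma bn_mean n : \sum_(m < n.+1) bn n m * m%:R = n%:R * p.
Proof.
case: n => [|k]; first by rewrite big_ord_recl big_ord0 mulr0 addr0 mul0r.
rewrite big_ord_recl /= mulr0 add0r.
have -> : \sum_(i < k.+1) bn k.+1 (bump 0 i) * (bump 0 i)%:R =
          \sum_(i < k.+1) (k.+1%:R * p) * bn k i.
  apply: eq_bigr => i _; rewrite /bn /bump /= add1n subSS.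
  have h := mul_bin_diag k.+1 i; rewrite /= in h.
  have h' : ('C(k.+1, i.+1)%:R * i.+1%:R : R) = k.+1%:R * 'C(k, i)%:R.
    by rewrite -!natrM mulnC -h.
  rewrite exprS.
  transitivity (('C(k.+1, i.+1)%:R * i.+1%:R) * p * p ^+ i * (1 - p) ^+ (k - i)); first by ring.
  rewrite h'; ring.
by rewrite -big_distrr /= bn_sum mulr1.
Qed.

Lemma Q_zero0 x : Qbar p x 0 = 0.
Proof. by rewrite /Qbar; case: x => //= n; case: ifP. Qed.

Lemma Q_big x y : (x.+1 < y)%N -> Qbar p x y = 0.
Proof.
move=> h; rewrite /Qbar; case: ifP => // _.
have -> : (1 <= y <= x - 1)%N = false.
  by apply/negbTE; rewrite negb_and -ltnNge; apply/orP; right; lia.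
have -> : (y == x.+1) = false by apply/negbTE; lia.
by have -> : (y == x) = false by apply/negbTE; lia.
Qed.

Lemma Q_low n m : (m < n)%N -> Qbar p n.+1 m.+1 = p * bn n m.
Proof.
move=> h; rewrite /Qbar /= subn1 /= h /bn subSS subn0 exprS; ring.
Qed.

Lemma Q_up n : Qbar p n.+1 n.+2 = n.+2%:R * p.
Proof.
rewrite /Qbar /= subn1 /=.
have -> : (n.+1 < n)%N = false by lia.
by rewrite eqxx.
Qed.

Lemma Q_diag n : Qbar p n.+1 n.+1 = p ^+ n.+1 - (2 + n.+1)%:R * p.
Proof.
rewrite /Qbar /= subn1 /= ltnn.
have -> : (n.+1 == n.+2) = false by apply/negbTE; lia.
by rewrite eqxx.
Qed.

Lemma Q_ge0 x y : x != y -> 0 <= Qbar p x y.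
Proof.
move=> xy; rewrite /Qbar; case: ifP => // _; case: ifP => _.
  apply: mulr_ge0; first apply: mulr_ge0.
  - exact: ler0n.
  - exact: exprn_ge0 (ltW p0).
  - by apply: exprn_ge0; have := p1; lra.
case: ifP => _; first by apply: mulr_ge0; [exact: ler0n| exact: ltW].
by rewrite eq_sym (negbTE xy).
Qed.

Definition jr x : R := jump_rate (Qbar p) x.

Lemma jrE n : jr n.+1 = n.+3%:R * p - p ^+ n.+1.
Proof.
rewrite /jr /jump_rate Q_diag.
have -> : (2 + n.+1)%N = n.+3 by lia.
ring.
Qed.

Lemma pexp_le n : p ^+ n.+1 <= p.
Proof.
rewrite exprS -[leRHS]mulr1 ler_pM2l //.
by apply: exprn_ile1; apply: ltW.
Qed.

Lemma jr_gt0 n : 0 < jr n.+1.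
Proof.
rewrite jrE; have := pexp_le n.
have : 3%:R * p <= n.+3%:R * p.
  by apply: ler_wpM2r; [exact: ltW| rewrite ler_nat; lia].
have := p0; move=> h0 h1 h2; lra.
Qed.

Lemma jr_le n : jr n.+1 <= n.+3%:R * p.
Proof. rewrite jrE; have := exprn_ge0 n.+1 (ltW p0); have := p0; lra. Qed.

Lemma JM n y : jump_matrix (Qbar p) n.+1 y =
  if y == n.+1 then 0 else Qbar p n.+1 y / jr n.+1.
Proof.
rewrite /jump_matrix -/(jr _) (negbTE (lt0r_neq0 (jr_gt0 n))).
by rewrite eq_sym.
Qed.

Lemma JM_ge0 x y : (0 < x)%N -> 0 <= jump_matrix (Qbar p) x y.
Proof.
case: x => // n _; rewrite JM; case: eqP => // /eqP h.
by rewrite divr_ge0 ?Q_ge0 ?ltW ?jr_gt0 // eq_sym.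
Qed.

Lemma JM0 x : (0 < x)%N -> jump_matrix (Qbar p) x 0 = 0.
Proof. by case: x => // n _; rewrite JM Q_zero0 mul0r. Qed.

Lemma JM_big x y : (0 < x)%N -> (x.+1 < y)%N -> jump_matrix (Qbar p) x y = 0.
Proof. by case: x => // n _ h; rewrite JM Q_big // mul0r if_same. Qed.

Lemma JM_row n (g : nat -> R) :
  \sum_(y < n.+3) jump_matrix (Qbar p) n.+1 y * g y =
  (n.+2%:R * p * g n.+2 + p * \sum_(m < n.+1) bn n m * g m.+1
     - p ^+ n.+1 * g n.+1) / jr n.+1.
Proof.
rewrite big_ord_recr big_ord_recr big_ord_recl /=.
rewrite !JM eqxx /= Q_zero0 mul0r mul0r add0r.
have -> : (n.+2 == n.+1) = false by apply/negbTE; lia.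
rewrite Q_up big_ord_recr /= /bn subnn expr0 binn mulr1 mul1r.
have -> : \sum_(i < n) jump_matrix (Qbar p) n.+1 (bump 0 i) * g (bump 0 i) =
          \sum_(i < n) p * bn n i * g i.+1 / jr n.+1.
  apply: eq_bigr => i _; rewrite /bump /= add1n JM.
  have -> : (i.+1 == n.+1) = false by apply/negbTE; have := ltn_ord i; lia.
  rewrite Q_low //; ring.
rewrite -big_distrl /=.
have -> : \sum_(i < n) 'C(n, i)%:R * p ^+ i * (1 - p) ^+ (n - i) * g i.+1 =
   \sum_(i < n) bn n i * g i.+1 by [].
rewrite mulrDr mulr_sumr exprS.
have -> : \sum_(i < n) p * (bn n i * g i.+1) = \sum_(i < n) p * bn n i * g i.+1.
  by apply: eq_bigr => i _; rewrite mulrA.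
ring.
Qed.

End Basic.
Arguments bn {R} p n m.
Arguments jr {R} p x.


Section Logs.
Variable R : realType.

Lemma ln_sub (a b : R) : 0 < a -> 0 < b -> ln a - ln b <= a / b - 1.
Proof.
move=> a0 b0.
have ab : 0 < a / b by rewrite divr_gt0.
have -> : ln a - ln b = ln (a / b).
  by rewrite lnM ?posrE ?invr_gt0 // lnV ?posrE.
have := @le_ln1Dx R (a / b - 1).
have -> : 1 + (a / b - 1) = a / b by ring.
by apply; lra.
Qed.

Lemma ln_natS_diff (n : nat) : ln (n.+2%:R : R) - ln n.+1%:R <= n.+1%:R^-1.
Proof.
have := @ln_sub (n.+2%:R) (n.+1%:R) (ltr0Sn _ _) (ltr0Sn _ _).
have h : (n.+1%:R : R) != 0 by rewrite pnatr_eq0.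
rewrite -[n.+2%:R]natr1 mulrDl divff // mul1r addrAC subrr add0r; exact: id.
Qed.

End Logs.

Section Drift.
Variable R : realType.
Variable p : R.
Variable i : nat.

Lemma jensen_ln n : 0 < p -> p < 1 ->
  \sum_(m < n.+1) bn p n m * ln (m.+1%:R : R) <= ln (1 + n%:R * p).
Proof.
move=> p0 p1.
set mu := 1 + n%:R * p.
have mu0 : 0 < mu by rewrite /mu; have := ler0n R n; move=> h; nra.
apply: (@le_trans _ _ (\sum_(m < n.+1) bn p n m * (ln mu + (m.+1%:R / mu - 1)))).
  apply: ler_sum => m _; apply: ler_wpM2l; first exact: (bn_ge0 p0 p1).
  have := @ln_sub R m.+1%:R mu (ltr0Sn _ _) mu0; move=> h.
  rewrite addrC -subr_le0; rewrite -subr_le0 in h.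
  have e : ln (m.+1%:R : R) - (m.+1%:R / mu - 1 + ln mu) =
           ln (m.+1%:R : R) - ln mu - (m.+1%:R / mu - 1) by ring.
  by rewrite e.
have -> : \sum_(m < n.+1) bn p n m * (ln mu + (m.+1%:R / mu - 1)) =
  (ln mu - 1 + mu^-1) * \sum_(m < n.+1) bn p n m +
   mu^-1 * \sum_(m < n.+1) bn p n m * m%:R.
  rewrite !big_distrr -big_split /=; apply: eq_bigr => m _.
  rewrite -natr1; ring.
rewrite bn_sum bn_mean.
have -> : (ln mu - 1 + mu^-1) * 1 + mu^-1 * (n%:R * p) = ln mu - 1 + mu^-1 * mu.
  rewrite /mu; ring.
by rewrite mulVf ?lt0r_neq0 // subrK.
Qed.


End Drift.

Section Drift2.
Context {R : realType} (p : R) (p0 : 0 < p) (p1 : p < 1) (pe : p < expR (-1))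
  (i : nat) (i0 : (0 < i)%N).

Definition delta : R := - (1 + ln p).
Definition CC : R := 2 / (p * delta).
Definition NN : nat := (Num.trunc (4 / (p * delta))).+1.
Definition AA : R := (2 * p)^-1.
Definition EE : R := AA * (i%:R - 1) + (1 + 2 * p * CC) / (p * (1 - p) ^+ NN).
Definition V (y : nat) : R :=
  if (y <= i)%N then AA * (i%:R - y%:R) else CC * ln (y%:R : R) + EE.

Lemma delta_gt0 : 0 < delta.
Proof.
have h : ln p < -1.
  have := pe; rewrite -(ltr_ln (x:=p)) ?posrE ?expR_gt0 // expRK.
  by [].
rewrite /delta; lra.
Qed.

Lemma pd_gt0 : 0 < p * delta.
Proof. by rewrite mulr_gt0 // delta_gt0. Qed.

Lemma CC_gt0 : 0 < CC.
Proof. by rewrite /CC divr_gt0 // pd_gt0. Qed.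

Lemma AA_gt0 : 0 < AA.
Proof. by rewrite /AA invr_gt0 mulr_gt0. Qed.

Lemma q_gt0 : 0 < 1 - p.
Proof. by have := p1; lra. Qed.

Lemma Delta_gt0 : 0 < (1 + 2 * p * CC) / (p * (1 - p) ^+ NN).
Proof.
apply: divr_gt0; last by rewrite mulr_gt0 // exprn_gt0 // q_gt0.
have := CC_gt0; have := p0; move=> h1 h2; nra.
Qed.

Lemma EE_ge0 : 0 <= EE.
Proof.
rewrite /EE; apply: addr_ge0; last exact: ltW Delta_gt0.
apply: mulr_ge0; first exact: ltW AA_gt0.
rewrite subr_ge0 ler1n //.
Qed.

Lemma V_ge0 y : 0 <= V y.
Proof.
rewrite /V; case: ifP => h.
  by apply: mulr_ge0; [exact: ltW AA_gt0| rewrite subr_ge0 ler_nat].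
apply: addr_ge0; last exact: EE_ge0.
apply: mulr_ge0; first exact: ltW CC_gt0.
apply: ln_ge0; rewrite ler1n; lia.
Qed.

Lemma V_i : V i = 0.
Proof. by rewrite /V leqnn subrr mulr0. Qed.

Lemma DC_low n : (n.+1 < i)%N ->
  1 + n.+2%:R * p * V n.+2 + p * \sum_(m < n.+1) bn p n m * V m.+1
    <= n.+3%:R * p * V n.+1.
Proof.
move=> hn.
have eS : \sum_(m < n.+1) bn p n m * V m.+1 = AA * (i%:R - 1 - n%:R * p).
  transitivity (\sum_(m < n.+1) (AA * (i%:R - 1) * bn p n m - AA * (bn p n m * m%:R))).
    apply: eq_bigr => m _; rewrite /V ifT; last by have := ltn_ord m; lia.
    rewrite -natr1; ring.
  by rewrite sumrB -!big_distrr /= bn_sum bn_mean; ring.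
rewrite eS /V ifT ?ifT; [|lia|lia].
rewrite -subr_ge0.
have -> : n.+3%:R * p * (AA * (i%:R - n.+1%:R)) -
   (1 + n.+2%:R * p * (AA * (i%:R - n.+2%:R)) + p * (AA * (i%:R - 1 - n%:R * p)))
   = n%:R * p / 2.
  rewrite /AA -!natr1; field.
  by rewrite lt0r_neq0.
by apply: divr_ge0 => //; apply: mulr_ge0 => //; exact: ltW.
Qed.

Lemma NN_bound : 4 / (p * delta) < NN%:R.
Proof. by rewrite /NN truncnS_gt. Qed.

Lemma S_bound n : (i < n.+1)%N ->
  \sum_(m < n.+1) bn p n m * V m.+1 <=
  CC * ln (1 + n%:R * p) + EE - bn p n 0 * (EE - AA * (i%:R - 1)).
Proof.
move=> hn.
set D := EE - AA * (i%:R - 1).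
apply: (@le_trans _ _ (\sum_(m < n.+1) bn p n m * (CC * ln (m.+1%:R : R) + EE - (m == 0)%:R * D))).
  apply: ler_sum => m _; apply: ler_wpM2l; first exact: (bn_ge0 p0 p1).
  rewrite /V; case: ifP => hm; last first.
    case: eqP => [m0|_]; last by rewrite mul0r subr0.
    by move: hm; rewrite m0 i0.
  case: eqP => [->|/eqP m0].
    have -> : (0.+1%:R : R) = 1 by [].
    rewrite ln1 mulr0 add0r mul1r /D.
    have -> : EE - (EE - AA * (i%:R - 1)) = AA * (i%:R - 1) by ring.
    by [].
  rewrite mul0r subr0.
  have h1 : AA * (i%:R - m.+1%:R) <= AA * (i%:R - 1).
    apply: ler_wpM2l; first exact: ltW AA_gt0.
    by rewrite lerB // ler1n.
  have h2 : AA * (i%:R - 1) <= EE.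
    by rewrite /EE lerDl; exact: ltW Delta_gt0.
  have h3 : 0 <= CC * ln (m.+1%:R : R).
    by apply: mulr_ge0; [exact: ltW CC_gt0| apply: ln_ge0; rewrite ler1n].
  apply: le_trans h1 _; apply: le_trans h2 _; rewrite lerDr //.
have -> : \sum_(m < n.+1) bn p n m * (CC * ln (m.+1%:R : R) + EE - (m == 0)%:R * D) =
   CC * \sum_(m < n.+1) bn p n m * ln (m.+1%:R : R) + EE * \sum_(m < n.+1) bn p n m
   - \sum_(m < n.+1) bn p n m * (m == 0)%:R * D.
  rewrite !big_distrr /= -big_split /= -sumrB; apply: eq_bigr => m _; ring.
have -> : \sum_(m < n.+1) bn p n m * (m == 0)%:R * D = bn p n 0 * D.
  rewrite big_ord_recl /= mulr1 big1 ?addr0 //.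
  by move=> m _; rewrite mulr0 mul0r.
rewrite bn_sum mulr1.
rewrite lerB // lerD2r; apply: ler_wpM2l; first exact: ltW CC_gt0.
exact: jensen_ln.
Qed.

Lemma aux_small (a b u : R) : a <= 1 + u -> b <= 0 -> u <= 1 -> a + b <= 2.
Proof. move=> *; lra. Qed.
Lemma aux_large (a b u w : R) : a <= 1 + u -> b <= ln p + w -> u <= w ->
  4 * w < delta -> a + b <= - delta / 2.
Proof. rewrite /delta; move: (ln p) => l *; lra. Qed.
Lemma aux_fin (x : R) : x <= -1 -> 1 + x <= 0.
Proof. move=> *; lra. Qed.

Lemma star n : (i < n.+1)%N ->
  1 + p * CC * (n.+2%:R * (ln (n.+2%:R : R) - ln n.+1%:R) +
                (ln (1 + n%:R * p) - ln n.+1%:R))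
  <= p * bn p n 0 * (EE - AA * (i%:R - 1)).
Proof.
move=> hn.
set L1 := ln (n.+1%:R : R); set L2 := ln (n.+2%:R : R).
set mu := 1 + n%:R * p.
set u := (n.+1%:R : R)^-1.
set w := (n.+1%:R * p)^-1.
have a0 : (0 : R) < n.+1%:R by rewrite ltr0Sn.
have mu0 : 0 < mu by rewrite /mu; have := ler0n R n; move=> h; have := p0; nra.
have u0 : 0 < u by rewrite /u invr_gt0.
have ue : u * n.+1%:R = 1 by rewrite /u mulVf ?lt0r_neq0.
have w0 : 0 < w by rewrite /w invr_gt0 mulr_gt0.
have we : w * (n.+1%:R * p) = 1 by rewrite /w mulVf ?lt0r_neq0 // mulr_gt0.
have uw : u <= w.
  have : u * 1 <= u * p^-1.
    apply: ler_wpM2l; first exact: ltW.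
    by rewrite invf_ge1 //; exact: ltW.
  by rewrite mulr1 /w invfM // mulrC /u.
have hT1 : n.+2%:R * (L2 - L1) <= 1 + u.
  have hh := ln_natS_diff R n.
  have : n.+2%:R * (L2 - L1) <= n.+2%:R * u by apply: ler_wpM2l => //; exact: ler0n.
  rewrite -natr1 => H; apply: le_trans H _.
  by rewrite mulrDl mul1r [_ * u]mulrC ue.
have F2 : ln mu - L1 <= 0.
  rewrite subr_le0 /L1 ler_ln ?posrE // /mu -natr1 addrC lerD2r.
  rewrite -[leRHS]mulr1 ler_wpM2l ?ler0n //; exact: ltW.
have F3 : ln mu - L1 <= ln p + w.
  have e : ln (n.+1%:R * p) = L1 + ln p by rewrite lnM ?posrE.
  have h := @ln_sub R mu (n.+1%:R * p) mu0 (mulr_gt0 a0 p0).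
  rewrite e in h.
  have : mu / (n.+1%:R * p) - 1 <= w.
    rewrite -/w /mu.
    have -> : (1 + n%:R * p) * w - 1 = (1 - p) * w.
      have -> : (1 + n%:R * p) * w - 1 = (1 + n%:R * p) * w - w * (n.+1%:R * p).
        by rewrite we.
      rewrite -natr1; ring.
    rewrite -[leRHS]mul1r ler_wpM2r //; [exact: ltW | have := p0; lra].
  move=> h'; move: h h'; set X := mu / _; move=> h h'; lra.
have pC : p * CC * delta = 2.
  rewrite /CC; move: delta_gt0; move: (delta) => d d0.
  by field; rewrite !lt0r_neq0.
have pC0 : 0 <= p * CC by rewrite mulr_ge0 //; [exact: ltW| exact: ltW CC_gt0].
have D0 := Delta_gt0.
have -> : EE - AA * (i%:R - 1) = (1 + 2 * p * CC) / (p * (1 - p) ^+ NN).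
  by rewrite /EE; ring.
have b0e : bn p n 0 = (1 - p) ^+ n by rewrite /bn bin0 expr0 mulr1 mul1r subn0.
case: (ltnP n.+1 NN) => hN.
  have hT : n.+2%:R * (L2 - L1) + (ln mu - L1) <= 2.
    have : u <= 1 by rewrite /u invf_le1 // ler1n.
    by move=> h; apply: aux_small hT1 F2 h.
  have h1 : 1 + p * CC * (n.+2%:R * (L2 - L1) + (ln mu - L1)) <= 1 + 2 * (p * CC).
    rewrite lerD2l mulrC; apply: ler_wpM2r => //.
  apply: le_trans h1 _.
  rewrite b0e.
  have q0 := q_gt0.
  have q1 : 1 - p <= 1 by rewrite lerBlDr lerDl; exact: ltW.
  have hq : (1 - p) ^+ NN <= (1 - p) ^+ n.
    by apply: ler_wiXn2l; [exact: ltW | exact: q1 | exact: leq_trans (leqnSn n) (ltnW hN)].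
  have qN0 : 0 < (1 - p) ^+ NN by rewrite exprn_gt0.
  have K0 : 0 <= 1 + 2 * (p * CC).
    by apply: addr_ge0 => //; apply: mulr_ge0.
  have -> : p * (1 - p) ^+ n * ((1 + 2 * p * CC) / (p * (1 - p) ^+ NN)) =
     (1 + 2 * (p * CC)) * ((1 - p) ^+ n / (1 - p) ^+ NN).
    rewrite invfM; field.
    by rewrite !lt0r_neq0.
  have r1 : 1 <= (1 - p) ^+ n / (1 - p) ^+ NN by rewrite ler_pdivlMr // mul1r.
  by rewrite -[leLHS]mulr1 ler_wpM2l.
have hw : 4 * w < delta.
  have h := NN_bound.
  have : 4 / (p * delta) < n.+1%:R.
    apply: lt_le_trans h _; rewrite ler_nat //.
  rewrite ltr_pdivrMr ?pd_gt0 // => h2.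
  have : 4 * w < n.+1%:R * (p * delta) * w by rewrite ltr_pM2r.
  have -> : n.+1%:R * (p * delta) * w = delta * (w * (n.+1%:R * p)) by ring.
  by rewrite we mulr1.
have hT : n.+2%:R * (L2 - L1) + (ln mu - L1) <= - delta / 2.
  exact: aux_large hT1 F3 uw hw.
have h1 : p * CC * (n.+2%:R * (L2 - L1) + (ln mu - L1)) <= p * CC * (- delta / 2).
  by apply: ler_wpM2l.
have e : p * CC * (- delta / 2) = -1.
  have -> : p * CC * (- delta / 2) = - (p * CC * delta) / 2 by ring.
  by rewrite pC; field.
rewrite e in h1.
apply: (@le_trans _ _ 0); first exact: aux_fin h1.
apply: mulr_ge0; last exact: ltW D0.
by apply: mulr_ge0; [exact: ltW| exact: (bn_ge0 p0 p1)].
Qed.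

Lemma DC_high n : (i < n.+1)%N ->
  1 + n.+2%:R * p * V n.+2 + p * \sum_(m < n.+1) bn p n m * V m.+1
    <= n.+3%:R * p * V n.+1.
Proof.
move=> hn.
have eV1 : V n.+1 = CC * ln (n.+1%:R : R) + EE.
  by rewrite /V ifF //; apply/negbTE; rewrite -ltnNge.
have eV2 : V n.+2 = CC * ln (n.+2%:R : R) + EE.
  by rewrite /V ifF //; apply/negbTE; rewrite -ltnNge; apply: leq_trans hn _.
rewrite eV1 eV2.
have hS := S_bound n hn.
have hpS := ler_wpM2l (ltW p0) hS.
apply: le_trans (lerD (lexx (1 + n.+2%:R * p * (CC * ln (n.+2%:R : R) + EE))) hpS) _.
rewrite -subr_ge0.
have -> : n.+3%:R * p * (CC * ln (n.+1%:R : R) + EE) -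
  (1 + n.+2%:R * p * (CC * ln (n.+2%:R : R) + EE) +
   p * (CC * ln (1 + n%:R * p) + EE - bn p n 0 * (EE - AA * (i%:R - 1)))) =
  p * bn p n 0 * (EE - AA * (i%:R - 1)) -
  (1 + p * CC * (n.+2%:R * (ln (n.+2%:R : R) - ln n.+1%:R) +
                (ln (1 + n%:R * p) - ln n.+1%:R))).
  move: (ln (n.+2%:R : R)) (ln (n.+1%:R : R)) => a b.
  rewrite -!natr1; ring.
by rewrite subr_ge0; exact: star.
Qed.

Lemma drift x : (0 < x)%N -> x != i ->
  (jr p x)^-1 + \sum_(y < x.+2) jump_matrix (Qbar p) x y * V y <= V x.
Proof.
case: x => // n _ hni.
rewrite (JM_row p0 p1).
have J0 := jr_gt0 p0 p1 n.
have -> : (jr p n.+1)^-1 + (n.+2%:R * p * V n.+2 + p * \sum_(m < n.+1) bn p n m * V m.+1 -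
          p ^+ n.+1 * V n.+1) / jr p n.+1 =
   (1 + (n.+2%:R * p * V n.+2 + p * \sum_(m < n.+1) bn p n m * V m.+1 -
          p ^+ n.+1 * V n.+1)) / jr p n.+1.
  by rewrite [RHS]mulrDl mul1r.
rewrite ler_pdivrMr // (jrE p0 p1) -subr_ge0.
have -> : V n.+1 * (n.+3%:R * p - p ^+ n.+1) -
   (1 + (n.+2%:R * p * V n.+2 + p * \sum_(m < n.+1) bn p n m * V m.+1 - p ^+ n.+1 * V n.+1))
   = n.+3%:R * p * V n.+1 - (1 + n.+2%:R * p * V n.+2 + p * \sum_(m < n.+1) bn p n m * V m.+1).
  by ring.
rewrite subr_ge0.
case: (ltngtP n.+1 i) => h.
- exact: DC_low.
- exact: DC_high.
- by rewrite h eqxx in hni.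
Qed.

End Drift2.


Section Sums.
Context {R : realType}.

Lemma iota_ord (F : nat -> R) M : F 0%N = 0 ->
  \sum_(y <- iota 1 M) F y = \sum_(y < M.+1) F y.
Proof.
move=> F0; rewrite -(big_mkord xpredT) big_ltn // F0 add0r.
by rewrite /index_iota subSS subn0.
Qed.

Lemma ord_supp_eq (F : nat -> R) N K : (forall y, (N < y)%N -> F y = 0) ->
  (N < K)%N -> \sum_(y < K) F y = \sum_(y < N.+1) F y.
Proof.
move=> FN NK; rewrite -!(big_mkord xpredT) (big_cat_nat _ (n:=N.+1)) //=.
rewrite [X in _ + X]big1_seq ?addr0 // => y /andP[_].
by rewrite mem_index_iota => /andP[h _]; apply: FN.
Qed.

Lemma ord_supp_le (F : nat -> R) N K : (forall y, 0 <= F y) ->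
  (forall y, (N < y)%N -> F y = 0) ->
  \sum_(y < K) F y <= \sum_(y < N.+1) F y.
Proof.
move=> F0 FN; case: (ltnP N K) => NK; first by rewrite (ord_supp_eq _ _ _ FN NK).
rewrite -!(big_mkord xpredT) [leRHS](big_cat_nat _ (n:=K)) //=.
  by rewrite lerDl; apply: sumr_ge0 => y _; apply: F0.
by apply: leq_trans NK _.
Qed.

End Sums.

Section Paths.
Context {R : realType} {p : R} (p0 : 0 < p) (p1 : p < 1) (i : nat) (i0 : (0 < i)%N).
Local Notation JMp := (jump_matrix (Qbar p)).

Lemma jr0 : jr p 0 = 0.
Proof. by rewrite /jr /jump_rate /Qbar /= oppr0. Qed.

Lemma JM_ge0_all x y : 0 <= JMp x y.
Proof.
case: x => [|n]; last exact: (JM_ge0 p0 p1).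
by rewrite /jump_matrix -/(jr p 0) jr0 eqxx ler0n.
Qed.

Lemma c_ge0 x : 0 <= (jump_rate (Qbar p) x)^-1.
Proof.
rewrite invr_ge0 -/(jr p x); case: x => [|n]; first by rewrite jr0.
exact: ltW (jr_gt0 p0 p1 n).
Qed.

Lemma row1 x : (0 < x)%N -> \sum_(y < x.+2) JMp x y * 1 = 1.
Proof.
case: x => // n _; rewrite (JM_row p0 p1 n (fun _ => 1)) /=.
have -> : \sum_(m < n.+1) bn p n m * 1 = 1.
  by under eq_bigr do rewrite mulr1; exact: bn_sum.
rewrite (jrE p0 p1) !mulr1.
have -> : n.+2%:R * p + p - p ^+ n.+1 = n.+3%:R * p - p ^+ n.+1.
  by rewrite -[n.+3]addn1 natrD; ring.
by rewrite divff // -(jrE p0 p1) lt0r_neq0 // (jr_gt0 p0 p1).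
Qed.

Lemma decomp (h : nat -> R) M x : (0 < x)%N -> (forall y, 0 <= h y) ->
  JMp x i * h i + \sum_(y <- iota 1 M | y != i) JMp x y * h y <=
  \sum_(y < x.+2) JMp x y * h y
  /\ ((x < M)%N -> JMp x i * h i + \sum_(y <- iota 1 M | y != i) JMp x y * h y =
      \sum_(y < x.+2) JMp x y * h y).
Proof.
move=> x0 h0.
set F := fun y => JMp x y * h y.
set G := fun y => if y != i then F y else 0.
have Fsupp : forall y, (x.+1 < y)%N -> F y = 0.
  by move=> y hy; rewrite /F (JM_big p0 p1) ?mul0r.
have Gsupp : forall y, (x.+1 < y)%N -> G y = 0.
  by move=> y hy; rewrite /G Fsupp //; case: ifP.
have G0 : forall y, 0 <= G y.
  by move=> y; rewrite /G; case: ifP => // _; apply: mulr_ge0 => //; exact: JM_ge0_all.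
have e1 : \sum_(y <- iota 1 M | y != i) JMp x y * h y = \sum_(y < M.+1) G y.
  rewrite big_mkcond iota_ord //.
  by rewrite /G /F (JM0 p0 p1) // mul0r; case: ifP.
have e2 : \sum_(y < x.+2) JMp x y * h y = F i + \sum_(y < x.+2) G y.
  rewrite (bigID (fun y : 'I_x.+2 => nat_of_ord y == i)) /=.
  rewrite (big_ord1_eq _ (fun y => JMp x y * h y)); congr (_ + _).
    by case: ifP => // /negbT; rewrite -leqNgt => hi; rewrite Fsupp.
  by rewrite big_mkcond /G; apply: eq_bigr => y _; case: ifP.
rewrite e1 e2 /F; split.
  by rewrite lerD2l; apply: ord_supp_le.
by move=> xM; rewrite (ord_supp_eq _ _ _ Gsupp).
Qed.

Lemma row_le1 (h : nat -> R) M x : (0 < x)%N -> (forall y, 0 <= h y <= 1) ->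
  JMp x i * h i + \sum_(y <- iota 1 M | y != i) JMp x y * h y <= 1.
Proof.
move=> x0 hb.
have h0 : forall y, 0 <= h y by move=> y; case/andP: (hb y).
have [d1 _] := decomp h M x x0 h0.
apply: le_trans d1 _.
rewrite -[leRHS](row1 x x0); apply: ler_sum => y _; apply: ler_wpM2l; first exact: JM_ge0_all.
by case/andP: (hb y).
Qed.

Lemma sum_le (h1 h2 : nat -> R) M x :
  (forall y, (0 < y)%N -> y != i -> h1 y <= h2 y) ->
  \sum_(y <- iota 1 M | y != i) JMp x y * h1 y <=
  \sum_(y <- iota 1 M | y != i) JMp x y * h2 y.
Proof.
move=> h; rewrite big_seq_cond [leRHS]big_seq_cond; apply: ler_sum => y /andP[yM yi].
apply: ler_wpM2l; first exact: JM_ge0_all.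
by apply: h => //; move: yM; rewrite mem_iota => /andP[].
Qed.

Fixpoint paths (M n : nat) : seq (seq nat) :=
  if n is n'.+1 then
    [:: i] :: [seq y :: t | y <- [seq y <- iota 1 M | y != i], t <- paths M n']
  else [::].

Lemma sum_paths (f : seq nat -> R) M n :
  \sum_(t <- paths M n.+1) f t =
  f [:: i] + \sum_(y <- iota 1 M | y != i) \sum_(t <- paths M n) f (y :: t).
Proof. by rewrite /= big_cons big_allpairs_dep big_filter. Qed.

Definition cc x : R := (jump_rate (Qbar p) x)^-1.
Definition HP M n x := \sum_(t <- paths M n) path_prob (Qbar p) x t.
Definition PT M n x :=
  \sum_(t <- paths M n) path_prob (Qbar p) x t * path_mean_time (Qbar p) x t.

Lemma pp_ge0 x t : 0 <= path_prob (Qbar p) x t.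
Proof.
elim: t x => [|y t IH] x /=; first exact: ler01.
by apply: mulr_ge0; [exact: JM_ge0_all| exact: IH].
Qed.

Lemma pmt_ge0 x t : 0 <= path_mean_time (Qbar p) x t.
Proof. by apply: sumr_ge0 => z _; exact: c_ge0. Qed.

Lemma HP_S M n x : HP M n.+1 x =
  JMp x i + \sum_(y <- iota 1 M | y != i) JMp x y * HP M n y.
Proof.
rewrite /HP sum_paths /= mulr1; congr (_ + _); apply: eq_bigr => y _.
by rewrite big_distrr.
Qed.

Lemma PT_S M n x : PT M n.+1 x =
  JMp x i * cc x + \sum_(y <- iota 1 M | y != i) JMp x y * (cc x * HP M n y + PT M n y).
Proof.
rewrite /PT sum_paths /= mulr1 /path_mean_time /= big_seq1; congr (_ + _).
apply: eq_bigr => y _; rewrite /HP mulrDr big_distrr big_distrr big_distrr -big_split /=.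
apply: eq_bigr => t _; rewrite big_cons /cc; ring.
Qed.

Lemma HP_ge0 M n x : 0 <= HP M n x.
Proof. by apply: sumr_ge0 => t _; exact: pp_ge0. Qed.

Lemma PT_ge0 M n x : 0 <= PT M n x.
Proof. by apply: sumr_ge0 => t _; apply: mulr_ge0; [exact: pp_ge0| exact: pmt_ge0]. Qed.

Lemma HP_le1 M n x : (0 < x)%N -> HP M n x <= 1.
Proof.
elim: n x => [|n IH] x x0; first by rewrite /HP big_nil ler01.
rewrite HP_S.
apply: (@le_trans _ _ (JMp x i * 1 + \sum_(y <- iota 1 M | y != i) JMp x y * 1)).
  rewrite mulr1 lerD2l; apply: sum_le => y y0 _; exact: IH.
by apply: (row_le1 (fun _ => 1)) => // y; rewrite ler01 lexx.
Qed.

Fixpoint G M n x : R :=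
  if n is n'.+1 then cc x + \sum_(y <- iota 1 M | y != i) JMp x y * G M n' y else 0.
Fixpoint surv M n x : R :=
  if n is n'.+1 then \sum_(y <- iota 1 M | y != i) JMp x y * surv M n' y else 1.

Lemma PT_le_G M n x : (0 < x)%N -> PT M n x <= G M n x.
Proof.
elim: n x => [|n IH] x x0; first by rewrite /PT big_nil.
rewrite PT_S /=.
apply: (@le_trans _ _ (JMp x i * cc x +
    \sum_(y <- iota 1 M | y != i) JMp x y * (cc x * 1 + G M n y))).
  rewrite lerD2l; apply: sum_le => y y0 _; apply: lerD; last exact: IH.
  by apply: ler_wpM2l; [exact: c_ge0| exact: HP_le1].
have -> : \sum_(y <- iota 1 M | y != i) JMp x y * (cc x * 1 + G M n y) =
  cc x * \sum_(y <- iota 1 M | y != i) JMp x y * 1 +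
  \sum_(y <- iota 1 M | y != i) JMp x y * G M n y.
  rewrite big_distrr -big_split /=; apply: eq_bigr => y _; ring.
rewrite addrA lerD2r.
have h : JMp x i * 1 + \sum_(y <- iota 1 M | y != i) JMp x y * 1 <= 1.
  by apply: (row_le1 (fun _ => 1) M x x0) => y; rewrite ler01 lexx.
have := ler_wpM2l (c_ge0 x) h; rewrite mulr1 mulrDr mulr1 [cc x * JMp x i]mulrC.
by [].
Qed.

Lemma surv_ge0 M n x : 0 <= surv M n x.
Proof.
elim: n x => [|n IH] x /=; first exact: ler01.
by apply: sumr_ge0 => y _; apply: mulr_ge0; [exact: JM_ge0_all| exact: IH].
Qed.

Lemma surv_le1 M n x : (0 < x)%N -> surv M n.+1 x <= surv M n x.
Proof.
elim: n x => [|n IH] x x0 /=.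
  have h : JMp x i * 1 + \sum_(y <- iota 1 M | y != i) JMp x y * 1 <= 1.
    by apply: (row_le1 (fun _ => 1) M x x0) => y; rewrite ler01 lexx.
  apply: le_trans h; rewrite lerDr mulr1; exact: JM_ge0_all.
apply: sum_le => y y0 _; exact: IH.
Qed.

Lemma surv_anti M m n x : (0 < x)%N -> (m <= n)%N -> surv M n x <= surv M m x.
Proof.
move=> x0; elim: n => [|n IH] h; first by move: h; rewrite leqn0 => /eqP ->.
case: (ltngtP m n.+1) h => // [hm _| -> _]; last exact: lexx.
by apply: le_trans (surv_le1 M n x x0) (IH _).
Qed.

Lemma HP_surv M n x : (0 < x)%N -> (x + n <= M)%N -> HP M n x + surv M n x = 1.
Proof.
elim: n x => [|n IH] x x0 hM; first by rewrite /HP big_nil add0r.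
rewrite HP_S /= -addrA -big_split /=.
have -> : \sum_(y <- iota 1 M | y != i) (JMp x y * HP M n y + JMp x y * surv M n y)
  = \sum_(y <- iota 1 M | y != i) JMp x y * 1.
  rewrite big_seq_cond [RHS]big_seq_cond; apply: eq_bigr => y /andP[yM _].
  rewrite -mulrDr; case: (leqP y x.+1) => hy.
    rewrite IH //; first by move: yM; rewrite mem_iota => /andP[].
    by apply: leq_trans hM; rewrite addnS -addSn leq_add2r.
  by rewrite (JM_big p0 p1) // !mul0r.
have [_ d2] := decomp (fun _ => 1) M x x0 (fun _ => ler01).
rewrite -(mulr1 (JMp x i)) d2 ?row1 //.
by apply: leq_trans hM; rewrite addnS ltnS leq_addr.
Qed.

End Paths.
Arguments cc {R} p x.
Arguments HP {R} p i M n x.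
Arguments PT {R} p i M n x.
Arguments G {R} p i M n x.
Arguments surv {R} p i M n x.

Section Chain.
Context {R : realType} {p : R} (p0 : 0 < p) (p1 : p < 1) (i : nat) (i0 : (0 < i)%N).
Local Notation JMp := (jump_matrix (Qbar p)).
Variable V : nat -> R.
Hypothesis V0 : forall y, 0 <= V y.
Hypothesis Vi : V i = 0.
Hypothesis drift : forall x, (0 < x)%N -> x != i ->
  cc p x + \sum_(y < x.+2) JMp x y * V y <= V x.

Lemma G_step M n x : (0 < x)%N ->
  (forall y, (0 < y)%N -> y != i -> G p i M n y <= V y) ->
  \sum_(y <- iota 1 M | y != i) JMp x y * G p i M n y <= \sum_(y < x.+2) JMp x y * V y.
Proof.
move=> x0 h.
apply: le_trans (sum_le p0 p1 i _ _ M x h) _.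
have [d1 _] := decomp p0 p1 i V M x x0 V0.
by apply: le_trans d1; rewrite Vi mulr0 add0r.
Qed.

Lemma G_le_V M n x : (0 < x)%N -> x != i -> G p i M n x <= V x.
Proof.
elim: n x => [|n IH] x x0 xi /=; first exact: V0.
apply: le_trans (drift x x0 xi); rewrite lerD2l.
by apply: G_step.
Qed.

Lemma G_i M n : G p i M n.+1 i <= cc p i + \sum_(y < i.+2) JMp i y * V y.
Proof.
rewrite /= lerD2l; apply: G_step => //.
by move=> y y0 yi; apply: G_le_V.
Qed.

End Chain.

Section Lower.
Context {R : realType} {p : R} (p0 : 0 < p) (p1 : p < 1) (i : nat) (i0 : (0 < i)%N).
Local Notation JMp := (jump_matrix (Qbar p)).

Lemma cc_lb x : (0 < x)%N -> (x.+2%:R * p)^-1 <= cc p x.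
Proof.
case: x => // n _; rewrite /cc -/(jr p n.+1).
have J0 := jr_gt0 p0 p1 n.
rewrite lef_pV2 ?posrE //; last by rewrite mulr_gt0.
exact: (jr_le p0 p1).
Qed.

Lemma G_lower M n x : (0 < x)%N ->
  \sum_(m < n) surv p i M m x / ((x + m).+2%:R * p) <= G p i M n x.
Proof.
elim: n x => [|n IH] x x0; first by rewrite big_ord0.
rewrite big_ord_recl /= addn0 div1r; apply: lerD; first exact: cc_lb.
have -> : \sum_(m < n) surv p i M (bump 0 m) x / ((x + bump 0 m).+2%:R * p) =
  \sum_(y <- iota 1 M | y != i) \sum_(m < n) JMp x y * (surv p i M m y / ((x + m).+3%:R * p)).
  rewrite exchange_big /=; apply: eq_bigr => m _.
  rewrite /bump /= add1n addnS big_distrl /=; apply: eq_bigr => y _; ring.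
rewrite big_seq_cond [leRHS]big_seq_cond; apply: ler_sum => y /andP[yM yi].
have y0 : (0 < y)%N by move: yM; rewrite mem_iota => /andP[].
rewrite -big_distrr /=.
case: (leqP y x.+1) => hy; last by rewrite (JM_big p0 p1) // !mul0r.
apply: ler_wpM2l; first exact: (JM_ge0_all p0 p1).
apply: le_trans (IH y y0); apply: ler_sum => m _.
apply: ler_wpM2l; first exact: (surv_ge0 p0 p1).
rewrite lef_pV2 ?posrE ?mulr_gt0 //.
apply: ler_wpM2r; first exact: ltW.
have h : (y + m <= x.+1 + m)%N by rewrite leq_add2r.
by rewrite ler_nat !ltnS.
Qed.

End Lower.

Local Open Scope classical_set_scope.

Section Mem.
Context (i : nat) (i0 : (0 < i)%N).

Let FRP := first_return_paths Nat1 i.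

Lemma FRP_single : FRP [:: i].
Proof.
split => //; split => //; split => // x; rewrite inE => /eqP ->; exact: i0.
Qed.

Lemma FRP_cons y a t : (0 < y)%N -> y != i -> FRP (a :: t) -> FRP (y :: a :: t).
Proof.
move=> y0 yi [_ [hl [ha hx]]]; split => //; split => //; split.
  by rewrite /= yi; exact: ha.
move=> x; rewrite inE => /orP[/eqP ->|]; first exact: y0.
exact: hx.
Qed.

Lemma FRP_inv y t : FRP (y :: t) ->
  (t = [::] /\ y = i) \/ (t != [::] /\ y != i /\ (0 < y)%N /\ FRP t).
Proof.
case: t => [|a t] [_ [hl [ha hx]]]; first by left.
right; split => //; move: ha => /= /andP[yi ha]; split => //; split.
  by apply: hx; rewrite mem_head.
split => //; split => //; split => // x xt; apply: hx.
by rewrite inE xt orbT.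
Qed.

Lemma paths_FRP M n t : t \in paths i M n -> FRP t /\ t != [::].
Proof.
elim: n t => [|n IH] t //=; rewrite inE => /orP[/eqP ->|]; first by split => //; exact: FRP_single.
move=> /allpairsP[[y t'] [/= yin t'in ->]].
move: yin; rewrite mem_filter mem_iota => /andP[yi /andP[y0 _]].
have [ft' nt'] := IH t' t'in.
split => //; case: t' ft' nt' {t'in} => // a t' ft' _.
exact: FRP_cons.
Qed.

Lemma paths_uniq M n : uniq (paths i M n).
Proof.
elim: n => [|n IH] //=; apply/andP; split.
  apply/allpairsP => -[[y t] [/= _ tin /eqP]]; rewrite eqseq_cons => /andP[_ /eqP t0].
  by have [_] := paths_FRP _ _ _ tin; rewrite -t0.
apply: allpairs_uniq => //; first by rewrite filter_uniq // iota_uniq.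
by move=> [y t] [y' t'] _ _ /= [-> ->].
Qed.

Lemma FRP_paths M n t : FRP t -> (size t <= n)%N -> all (fun y => y <= M)%N t ->
  t \in paths i M n.
Proof.
elim: n t => [|n IH] t ft; first by case: t ft => // -[].
move=> hs ha /=; rewrite inE; case: t ft hs ha => [[]//|y t] ft hs ha.
case: (FRP_inv _ _ ft) => [[-> ->]|[tn [yi [y0 ft']]]]; first by rewrite eqxx.
apply/orP; right; apply/allpairsP; exists (y, t) => /=; split => //.
  rewrite mem_filter yi mem_iota /= y0 /=.
  by move: ha => /= /andP[hy _]; rewrite add1n ltnS.
apply: IH => //; by move: ha => /= /andP[].
Qed.

Lemma fin_sub (A : set (seq nat)) : finite_set A -> A `<=` FRP ->
  exists M n, A `<=` [set` paths i M n].
Proof.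
move=> /finite_seqP[s ->] sub.
exists (\max_(t <- s) \max_(y <- t) y), (\max_(t <- s) size t).
move=> t /= ts; apply: FRP_paths; first exact: sub.
  by apply: leq_bigmax_seq.
apply/allP => y yt.
apply: (@leq_trans (\max_(y <- t) y)); first by apply: leq_bigmax_seq.
by apply: (leq_bigmax_seq (F := fun t : seq nat => \max_(y <- t) y)).
Qed.

Lemma esum_lb {R : realType} (g : seq nat -> R) M n :
  ((\sum_(t <- paths i M n) g t)%:E <= \esum_(t in FRP) (g t)%:E)%E.
Proof.
apply: esum_ge; exists [set` paths i M n].
  split; first exact: finite_seq.
  by move=> t /= tin; have [] := paths_FRP _ _ _ tin.
by rewrite -sumEFin fsbig_seq // paths_uniq.
Qed.

Lemma esum_ub {R : realType} (g : seq nat -> R) (B : R) :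
  (forall t, 0 <= g t) -> (forall M n, \sum_(t <- paths i M n) g t <= B) ->
  (\esum_(t in FRP) (g t)%:E <= B%:E)%E.
Proof.
move=> g0 hB; apply: ge_ereal_sup => /= _ [A [finA AF] <-].
have [M [n sub]] := fin_sub _ finA AF.
apply: (@le_trans _ _ (\sum_(t \in [set` paths i M n]) (g t)%:E)%R).
  apply: lee_fsum_nneg_subset => //; first exact: finite_seq.
    by move=> t; rewrite !inE => /sub.
  by move=> t _; rewrite lee_fin.
by rewrite -fsbig_seq ?paths_uniq // sumEFin lee_fin.
Qed.

End Mem.

Lemma harmonic {R : realType} (p : R) (p0 : 0 < p) (i : nat) (B : R) :
  exists n, B <= \sum_(m < n) ((i + m).+2%:R * p)^-1.
Proof.
set a := i.+2.
have key : forall n, ln ((a + n)%:R : R) - ln (a%:R : R) <= \sum_(m < n) ((a + m)%:R : R)^-1.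
  move=> n.
  have := @telescope_sumr _ 0 n (fun k => ln ((a + k)%:R : R)) (leq0n n).
  rewrite addn0 => <-; rewrite big_mkord; apply: ler_sum => m _.
  have h := @ln_sub R ((a + m).+1%:R) ((a + m)%:R) (ltr0Sn _ _) _.
  rewrite addnS; apply: le_trans (h _) _.
    by rewrite ltr0n /a addSn.
  have hn : ((a + m)%:R : R) != 0 by rewrite pnatr_eq0 /a addSn.
  by rewrite -natr1 mulrDl divff // mul1r addrAC subrr add0r.
set X := expR (p * B + ln (a%:R : R)).
exists (Num.trunc X).+1.
have hX : X < (Num.trunc X).+1%:R by rewrite truncnS_gt.
have ha0 : (0 : R) < a%:R by rewrite ltr0n.
have h1 : p * B + ln (a%:R : R) <= ln ((a + (Num.trunc X).+1)%:R : R).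
  rewrite -[leLHS](expRK) -/X ler_ln ?posrE ?expR_gt0 ?ltr0n ?addn_gt0 //.
  apply: ltW; apply: lt_le_trans hX _; rewrite ler_nat leq_addl //.
have h2 := key (Num.trunc X).+1.
have h3 : p * B <= \sum_(m < (Num.trunc X).+1) ((a + m)%:R : R)^-1.
  by apply: le_trans h2; rewrite lerBrDr.
have -> : \sum_(m < (Num.trunc X).+1) ((i + m).+2%:R * p)^-1 =
    p^-1 * \sum_(m < (Num.trunc X).+1) ((a + m)%:R : R)^-1.
  rewrite big_distrr /=; apply: eq_bigr => m _; rewrite invfM mulrC /a !addSn.
  by [].
rewrite -(ler_pM2l p0) mulrA mulfV ?mul1r //; exact: lt0r_neq0.
Qed.

Lemma main_i {R : realType} (p : R) (p0 : 0 < p) (p1 : p < 1) (pe : p < expR (-1))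
  (i : nat) (i0 : (0 < i)%N) : positive_recurrent_state (Qbar p) Nat1 i.
Proof.
pose W := V p i.
have W0 : forall y, 0 <= W y := V_ge0 p p0 p1 pe i i0.
have Wi : W i = 0 := V_i p i.
have Wd := drift p p0 p1 pe i i0.
pose K := cc p i + \sum_(y < i.+2) jump_matrix (Qbar p) i y * W y.
have K0 : 0 <= K.
  apply: addr_ge0; first exact: (c_ge0 p0 p1).
  by apply: sumr_ge0 => y _; apply: mulr_ge0; [exact: (JM_ge0_all p0 p1)| exact: W0].
have GK : forall M n, G p i M n i <= K.
  move=> M [|n] //=; exact: (G_i p0 p1 i i0 W W0 Wi Wd M n).
split.
- rewrite /recurrent_state /return_prob.
  apply/eqP; rewrite eq_le; apply/andP; split.
    apply: (esum_ub i i0) => [t|M n]; first exact: (pp_ge0 p0 p1).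
    exact: (HP_le1 p0 p1 i M n i i0).
  apply/lee_addgt0Pr => e e0.
  have [n hn] := harmonic p p0 i (K / e + 1).
  set S := \sum_(m < n) ((i + m).+2%:R * p)^-1 in hn.
  have S0 : 0 < S by apply: lt_le_trans hn; apply: ltr_wpDl => //; apply: divr_ge0 => //; exact: ltW.
  have hs : surv p i (i + n) n i * S <= K.
    apply: le_trans (GK (i + n)%N n).
    apply: le_trans (G_lower p0 p1 i (i + n) n i i0).
    rewrite /S big_distrr /=; apply: ler_sum => m _.
    apply: ler_wpM2r; first by rewrite invr_ge0 mulr_ge0 // ltW.
    by apply: (surv_anti p0 p1) => //; exact: ltnW.
  have hs' : surv p i (i + n) n i <= e.
    apply: le_trans (_ : K / S <= e).
      by rewrite ler_pdivlMr.
    rewrite ler_pdivrMr // -ler_pdivrMl //.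
    by apply: le_trans hn; rewrite mulrC lerDl.
  have e1 := HP_surv p0 p1 i (i + n) n i i0 (leqnn _).
  apply: (@le_trans _ _ ((HP p i (i + n) n i)%:E + e%:E)%E); last first.
    by rewrite leeD2r //; exact: (esum_lb i i0).
  rewrite -EFinD lee_fin.
  by rewrite -e1 lerD2l.
- apply: (@le_lt_trans _ _ K%:E); last exact: ltry.
  apply: (esum_ub i i0) => [t|M n].
    by apply: mulr_ge0; [exact: (pp_ge0 p0 p1)| exact: (pmt_ge0 p0 p1)].
  apply: le_trans (GK M n).
  exact: (PT_le_G p0 p1 i M n i i0).
Qed.

Local Close Scope classical_set_scope.

Theorem corollary7 (R : realType) (p : R) :
  0 < p -> p < expR (-1) -> positive_recurrent (Qbar p) Nat1.
Proof.
move=> p0 pe i i0.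
have p1 : p < 1.
  by apply: lt_le_trans pe _; rewrite -[leRHS]expR0 ler_expR lerN10.
exact: main_i.
Qed.
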